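(* Let $\rho,\sigma,\omega\in\mathcal{S}(\mathbb{C}^2)$ be qubit states each of which is orthogonal to $\sigma_z$ in the Hilbert–Schmidt sense (i.e. $\mathrm{tr}[\rho\sigma_z]=\mathrm{tr}[\sigma\sigma_z]=\mathrm{tr}[\omega\sigma_z]=0$). Then $$d^2_{z,2}(\rho,\sigma)+d^2_{z,2}(\sigma,\omega)\ge d^2_{z,2}(\rho,\omega).$$
   Context: Qubit setting: $\mathcal{H}=\mathbb{C}^2$, $\mathcal{H}^*$ is identified with $\mathbb{C}^2$ via the dual basis, and $A^T$ is the usual matrix transpose; operators on $\mathcal{H}\otimes\mathcal{H}^*$ are $4\times4$ matrices in the basis $e_1\otimes e_1^*,e_1\otimes e_2^*,e_2\otimes e_1^*,e_2\otimes e_2^*$. $\sigma_z=\begin{pmatrix}1&0\\0&-1\end{pmatrix}$. The set of couplings of states $\rho,\omega$ is $\mathcal{C}(\rho,\omega)=\{\Pi\in\mathcal{S}(\mathcal{H}\otimes\mathcal{H}^* ):\mathrm{tr}_{\mathcal{H}^*}[\Pi]=\omega,\ \mathrm{tr}_{\mathcal{H}}[\Pi]=\rho^T\}$. $C_{z,2}=(\sigma_z\otimes I^T-I\otimes\sigma_z^T)^2=\mathrm{diag}(0,4,4,0)$, $D^2_{z,2}(\rho,\omega)=\min_{\Pi\in\mathcal{C}(\rho,\omega)}\mathrm{tr}[\Pi C_{z,2}]$, and $d_{z,2}(\rho,\omega)=\big(D^2_{z,2}(\rho,\omega)-\tfrac12(D^2_{z,2}(\rho,\rho)+D^2_{z,2}(\omega,\omega))\big)^{1/2}$.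 The claim is the triangle inequality for the squared quantity $d^2_{z,2}$. *)

(* Defs.v *)
From HB Require Import structures.
From mathcomp Require Import all_boot all_order all_algebra.
From mathcomp Require Import complex mxtens.
From mathcomp Require Import classical_sets reals.
Set Implicit Arguments. Unset Strict Implicit. Unset Printing Implicit Defensive.
Import Order.TTheory GRing.Theory Num.Theory.
Local Open Scope ring_scope.
Local Open Scope complex_scope.

Section Qubit.
Variable R : realType.
Local Notation C := (R[i]).

Definition adjmx {m n} (A : 'M[C]_(m, n)) : 'M[C]_(n, m) := (map_mx (@conjc R) A)^T.

(* positive semidefinite: v^* A v >= 0 for all v (order on C: real and >= 0) *)
Definition psd {n} (A : 'M[C]_n) : Prop :=
  forall v : 'cV[C]_n, 0 <= (adjmx v *m A *m v) 0 0.

Definition density {n} (A : 'M[C]_n) : Prop := psd A /\ \tr A = 1.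

Definition sigz : 'M[C]_2 := \matrix_(i, j) (if i == j then (if i == 0 then 1 else -1) else 0).

(* Operators on H (x) H^*, with basis index mxtens_index (i, j) = 2 i + j,
   i.e. e_1(x)e_1^*, e_1(x)e_2^*, e_2(x)e_1^*, e_2(x)e_2^*. *)
Definition ptr2 (P : 'M[C]_(2 * 2)) : 'M[C]_2 :=
  \matrix_(i, k) \sum_(j < 2) P (mxtens_index (i, j)) (mxtens_index (k, j)).
Definition ptr1 (P : 'M[C]_(2 * 2)) : 'M[C]_2 :=
  \matrix_(j, l) \sum_(i < 2) P (mxtens_index (i, j)) (mxtens_index (i, l)).

Definition coupling (rho omega : 'M[C]_2) (P : 'M[C]_(2 * 2)) : Prop :=
  density P /\ ptr2 P = omega /\ ptr1 P = rho^T.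

Definition Cz2 : 'M[C]_(2 * 2) :=
  let X := sigz *t (1%:M)^T - (1%:M : 'M[C]_2) *t sigz^T in X *m X.

(* D^2_{z,2}(rho, omega) = min over couplings of tr[Pi C_{z,2}]
   (tr[Pi C] is real for Hermitian Pi; we take its real part to land in R) *)
Definition D2 (rho omega : 'M[C]_2) : R :=
  inf [set x : R | exists P, coupling rho omega P /\ x = @complex.Re R (\tr (P *m Cz2))].

Definition d2 (rho omega : 'M[C]_2) : R :=
  D2 rho omega - (D2 rho rho + D2 omega omega) / 2.

End Qubit.

(* Main.v *)
Require Import Defs.
From HB Require Import structures.
From mathcomp Require Import all_boot all_order all_algebra.
From mathcomp Require Import complex mxtens.
From mathcomp Require Import classical_sets reals.
From mathcomp Require Import ring lra.
Import Order.TTheory GRing.Theory Num.Theory.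
Local Open Scope ring_scope.
Local Open Scope complex_scope.

Section SA.
Variable R : realType.
Local Notation C := (R[i]).
Local Notation cj := (@conjc R).

Lemma quadform n (A : 'M[C]_n) (v : 'cV[C]_n) :
  (adjmx v *m A *m v) 0 0 = \sum_k \sum_l (cj (v k 0)) * A k l * v l 0.
Proof.
rewrite mxE exchange_big; apply: eq_bigr => l _.
rewrite mxE big_distrl; apply: eq_bigr => k _ /=.
by rewrite !mxE.
Qed.

Definition i0 : 'I_2 := ord0.
Definition i1 : 'I_2 := ord_max.

Lemma sum2 (V : nmodType) (F : 'I_2 -> V) : \sum_(i < 2) F i = F i0 + F i1.
Proof.
rewrite big_ord_recl big_ord1; congr (_ + F _); exact: val_inj.
Qed.

Definition ix (i j : 'I_2) : 'I_(2*2) := mxtens_index (i, j).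

Lemma sum4 (V : nmodType) (F : 'I_(2*2) -> V) :
  \sum_k F k = F (ix i0 i0) + F (ix i0 i1) + F (ix i1 i0) + F (ix i1 i1).
Proof.
rewrite (reindex (@mxtens_index 2 2)); last first.
  by exists (@mxtens_unindex 2 2) => x _; rewrite ?mxtens_indexK ?mxtens_unindexK.
rewrite (eq_bigr (fun p => F (mxtens_index (p.1, p.2)))); last by case.
rewrite -(pair_bigA _ (fun i j => F (mxtens_index (i, j)))) /=.
rewrite sum2 !sum2.
by rewrite addrA.
Qed.
Lemma ord2P (i : 'I_2) : i = i0 \/ i = i1.
Proof. case: i => [[|[|n]]] Hi; [left|right|by []]; exact: val_inj. Qed.

Lemma i01 : (i0 == i1) = false. Proof. by []. Qed.
Lemma i10 : (i1 == i0) = false. Proof. by []. Qed.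

Lemma sigzE (i j : 'I_2) : sigz R i j = if i == j then (if i == i0 then 1 else -1) else 0.
Proof. by rewrite mxE. Qed.

Lemma XE a b c d :
  (sigz R *t (1%:M)^T - (1%:M : 'M[C]_2) *t (sigz R)^T) (ix a b) (ix c d)
  = sigz R a c * (d == b)%:R - (a == c)%:R * sigz R d b.
Proof. by rewrite /ix !mxE !mxtens_indexK /= ?mxE. Qed.

Lemma trCz (P : 'M[C]_(2*2)) :
  \tr (P *m Cz2 R) = 4%:R * (P (ix i0 i1) (ix i0 i1) + P (ix i1 i0) (ix i1 i0)).
Proof.
rewrite /mxtrace sum4 !mxE !sum4 /Cz2 /= !mxE !sum4 !XE !sigzE !eqxx /= ?i01 ?i10 /=.

ring.
Qed.
Lemma sum_two (V : nmodType) n (F : 'I_n -> V) k l : k != l ->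
  (forall m, m != k -> m != l -> F m = 0) -> \sum_m F m = F k + F l.
Proof.
move=> kl H; rewrite (bigD1 k) //= (bigD1 l) /= 1?eq_sym //.
rewrite big1 ?addr0 // => m /andP [ml mk]; exact: H.
Qed.

Lemma sum_one (V : nmodType) n (F : 'I_n -> V) k :
  (forall m, m != k -> F m = 0) -> \sum_m F m = F k.
Proof.
move=> H; rewrite (bigD1 k) //= big1 ?addr0 // => m mk; exact: H.
Qed.

Lemma psd1 n (P : 'M[C]_n) k : psd P -> 0 <= P k k.
Proof.
move=> /(_ (\col_m (if m == k then 1 else 0))); rewrite quadform.


rewrite (@sum_one C _ _ k) => [|m mk]; last by rewrite big1 // => l _; rewrite !mxE (negPf mk) raddf0 !mul0r.
rewrite (@sum_one C _ _ k) => [|m mk]; last by rewrite !mxE (negPf mk) mulr0.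
by rewrite !mxE eqxx rmorph1 mul1r mulr1.
Qed.

Lemma psd2 n (P : 'M[C]_n) k l p q : k != l -> psd P ->
  0 <= (cj p) * P k k * p + (cj p) * P k l * q + ((cj q) * P l k * p + (cj q) * P l l * q).
Proof.
move=> kl /(_ (\col_m (if m == k then p else if m == l then q else 0))); rewrite quadform.
have lk : l != k by rewrite eq_sym.
rewrite (@sum_two C _ _ _ _ kl) => [|m mk ml]; last first.
  by rewrite big1 // => j _; rewrite !mxE (negPf mk) (negPf ml) raddf0 !mul0r.
rewrite (@sum_two C _ _ _ _ kl) => [|m mk ml]; last by rewrite !mxE (negPf mk) (negPf ml) mulr0.
rewrite (@sum_two C _ _ _ _ kl) => [|m mk ml]; last by rewrite !mxE (negPf mk) (negPf ml) mulr0.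
by rewrite !mxE eqxx (negPf lk) eqxx.
Qed.
Lemma herm n (P : 'M[C]_n) k l : k != l -> psd P -> P l k = (cj (P k l)).
Proof.
move=> kl H; have h1 := @psd2 _ P k l 1 1 kl H; have h2 := @psd2 _ P k l 1 'i kl H.
have d1 := @psd1 _ P k H; have d2 := @psd1 _ P l H.
move: h1 h2 d1 d2; rewrite !rmorph1 !mul1r !mulr1.
move: (P k k) (P k l) (P l k) (P l l) => [a1 b1] [a2 b2] [a3 b3] [a4 b4].
simpc.
move=> /andP[/eqP e1 _] /andP[/eqP e2 _] /andP[/eqP e3 _] /andP[/eqP e4 _].
congr Complex; lra.
Qed.

Definition nsq (z : C) : R := complex.Re z ^+ 2 + complex.Im z ^+ 2.

Lemma psd_diag n (P : 'M[C]_n) k : psd P -> P k k = (complex.Re (P k k)) +i* 0 /\ 0 <= complex.Re (P k k).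
Proof.
move=> H; have := @psd1 _ P k H; case: (P k k) => a b.
rewrite lecE /= => /andP[/eqP e ->]; by rewrite -e.
Qed.

Lemma minor n (P : 'M[C]_n) k l : k != l -> psd P ->
  nsq (P k l) <= complex.Re (P k k) * complex.Re (P l l).
Proof.
move=> kl H.
have [EA A0] := @psd_diag _ P k H; have [ED D0] := @psd_diag _ P l H.
have Hh := @herm _ P k l kl H.
set A := complex.Re (P k k) in EA A0 *; set D := complex.Re (P l l) in ED D0 *.
have key : forall s t : R, 0 <= A * s^+2 - 2%:R * s * t * nsq (P k l) + D * t^+2 * nsq (P k l).
  move=> s t; have := @psd2 _ P k l (s%:C) (-(t%:C * (cj (P k l)))) kl H.
  rewrite Hh EA ED /nsq; move: (P k l) => [x y].
  rewrite /= ; simpc; rewrite /= => /andP[_ h].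
  lra.
have N0 : 0 <= nsq (P k l) by rewrite /nsq; apply: addr_ge0; apply: sqr_ge0.
have k1 := key (nsq (P k l)) A; have k2 := key (D + 1) 1.
move: N0 k1 k2; set N := nsq (P k l) => N0 k1 k2; clearbody A D N.
have [A00|Ap] : A = 0 \/ 0 < A by rewrite le_eqVlt eq_sym in A0; case/orP: A0 => [/eqP ->|->]; [left|right].
  rewrite A00 mul0r in k2 *; have h : (D + 2%:R) * N <= 0 by lra.
  by move: h; rewrite pmulr_rle0; lra.
have h : 0 <= A * (N * (A * D - N)) by lra.
move: h; rewrite pmulr_rge0 //.
have [N00|Np] : N = 0 \/ 0 < N by rewrite le_eqVlt eq_sym in N0; case/orP: N0 => [/eqP ->|->]; [left|right].
  by rewrite N00; nra.
by rewrite pmulr_rge0 //; lra.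
Qed.
Lemma nsqC (z : C) : (nsq z)%:C = z * (cj z).
Proof. case: z => x y; rewrite /nsq /=; simpc; congr Complex; ring. Qed.

Lemma nsq_ge0 (z : C) : 0 <= nsq z.
Proof. by rewrite /nsq addr_ge0 // sqr_ge0. Qed.

Lemma nsq0 (z : C) : nsq z = 0 -> z = 0.
Proof.
case: z => x y; rewrite /nsq /= => /eqP; rewrite paddr_eq0 ?sqr_ge0 // !sqrf_eq0.
by case/andP => /eqP -> /eqP ->.
Qed.

Lemma nsqJ (z : C) : nsq ((cj z)) = nsq z.
Proof. case: z => x y; rewrite /nsq /=; ring. Qed.

Lemma nsqD (u v : C) : nsq (u + v) <= 2%:R * (nsq u + nsq v).
Proof.
case: u => x y; case: v => x' y'; rewrite /nsq /=.
have := sqr_ge0 (x - x'); have := sqr_ge0 (y - y'); lra.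
Qed.

Lemma ge0C (x : R) : 0 <= x -> 0 <= x%:C.
Proof. by rewrite lecR. Qed.

Lemma conjR (x : R) : (cj (x%:C)) = x%:C.
Proof. by rewrite /= oppr0. Qed.

Lemma normJ_ge0 (z : C) : 0 <= (cj z) * z.
Proof. by rewrite mulrC mulcJ_ge0. Qed.

Definition wf (a b x y r w : C) (p q : 'I_2 * 'I_2) : C :=
 let K := (2 * (p.1 != i0) + (p.2 != i0))%N in
 let L := (2 * (q.1 != i0) + (q.2 != i0))%N in
 match K, L with
 | 0,0 => a | 0,1 => (cj r)/2%:R | 0,2 => w/2%:R | 0,3 => x
 | 1,0 => r/2%:R | 1,1 => b | 1,2 => y | 1,3 => w/2%:R
 | 2,0 => (cj w)/2%:R | 2,1 => (cj y) | 2,2 => b | 2,3 => (cj r)/2%:R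
 | 3,0 => (cj x) | 3,1 => (cj w)/2%:R | 3,2 => r/2%:R | _,_ => a end.

Definition Wit (a b x y r w : C) : 'M[C]_(2*2) :=
  \matrix_(K, L) wf a b x y r w (mxtens_unindex K) (mxtens_unindex L).

Lemma WitE a b x y r w i j k l :
  Wit a b x y r w (ix i j) (ix k l) = wf a b x y r w (i, j) (k, l).
Proof. by rewrite mxE /ix !mxtens_indexK. Qed.

Lemma keyid (a r rc w wc v0 v1 v2 v3 c0 c1 c2 c3 : C) :
  a != 0 -> r != 0 -> rc != 0 ->
  let M := r * rc in let b := M / (4%:R * a) in
  let x := a * w * rc / M in let y := b * w * r / M in
  let xc := a * wc * r / M in let yc := b * wc * rc / M in
  c0 * a * v0 + c0 * (rc / 2%:R) * v1 + c0 * (w / 2%:R) * v2 + c0 * x * v3 +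
  (c1 * (r / 2%:R) * v0 + c1 * b * v1 + c1 * y * v2 + c1 * (w / 2%:R) * v3) +
  (c2 * (wc / 2%:R) * v0 + c2 * yc * v1 + c2 * b * v2 + c2 * (rc / 2%:R) * v3) +
  (c3 * xc * v0 + c3 * (wc / 2%:R) * v1 + c3 * (r / 2%:R) * v2 + c3 * a * v3)
  = a^-1 * ((c0 * a + c1 * (r / 2%:R) + c2 * (wc / 2%:R) + c3 * xc) *
            (v0 * a + v1 * (rc / 2%:R) + v2 * (w / 2%:R) + v3 * x))
    + (M - w * wc) / (4%:R * a) * ((c2 + c3 * (2%:R * a * r / M)) * (v2 + v3 * (2%:R * a * rc / M))).
Proof.
move=> a0 r0 rc0 M b x y xc yc; rewrite /x /y /xc /yc /b /M.
field.
by rewrite rc0 r0 a0.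
Qed.

Lemma keyid2 (a r rc w wc v0 v1 v2 v3 c0 c1 c2 c3 : C) :
  a != 0 -> w != 0 -> wc != 0 ->
  let M := w * wc in let b := M / (4%:R * a) in
  let x := a * w * rc / M in let y := b * w * r / M in
  let xc := a * wc * r / M in let yc := b * wc * rc / M in
  c0 * a * v0 + c0 * (rc / 2%:R) * v1 + c0 * (w / 2%:R) * v2 + c0 * x * v3 +
  (c1 * (r / 2%:R) * v0 + c1 * b * v1 + c1 * y * v2 + c1 * (w / 2%:R) * v3) +
  (c2 * (wc / 2%:R) * v0 + c2 * yc * v1 + c2 * b * v2 + c2 * (rc / 2%:R) * v3) +
  (c3 * xc * v0 + c3 * (wc / 2%:R) * v1 + c3 * (r / 2%:R) * v2 + c3 * a * v3)
  = a^-1 * ((c0 * a + c1 * (r / 2%:R) + c2 * (wc / 2%:R) + c3 * xc) *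
            (v0 * a + v1 * (rc / 2%:R) + v2 * (w / 2%:R) + v3 * x))
    + (M - r * rc) / (4%:R * a) * ((c1 + c3 * (2%:R * a * wc / M)) * (v1 + v3 * (2%:R * a * w / M))).
Proof.
move=> a0 r0 rc0 M b x y xc yc; rewrite /x /y /xc /yc /b /M.
field.
by rewrite rc0 r0 a0.
Qed.
End SA.
Arguments nsq {R}. Arguments Wit {R}. Arguments wf {R}. Arguments i0. Arguments ix.
Arguments nsq0 {R}. Arguments nsq_ge0 {R}. Arguments nsqC {R}. Arguments nsqJ {R}. Arguments nsqD {R}.
Arguments WitE {R}. Arguments keyid {R}. Arguments keyid2 {R}. Arguments quadform {R}.
Arguments psd_diag {R n P}. Arguments minor {R n P}. Arguments herm {R n P}. Arguments trCz {R}.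
Arguments normJ_ge0 {R}. Arguments ge0C {R}. Arguments conjR {R}.

Section SW.
Variable R : realType.
Local Notation C := (R[i]).
Local Notation cj := (@conjc R).

Lemma conjM (x y : C) : (cj (x * y)) = (cj x) * (cj y). Proof. exact: rmorphM. Qed.
Lemma conjV (x : C) : (cj (x^-1)) = ((cj x))^-1. Proof. exact: fmorphV. Qed.
Lemma conjD (x y : C) : (cj (x + y)) = (cj x) + (cj y). Proof. exact: rmorphD. Qed.

Lemma realCM (x y : R) : (x * y)%:C = x%:C * y%:C :> C. Proof. exact: rmorphM. Qed.
Lemma realCV (x : R) : (x^-1)%:C = (x%:C)^-1 :> C. Proof. exact: fmorphV. Qed.
Lemma realCB (x y : R) : (x - y)%:C = x%:C - y%:C :> C. Proof. exact: rmorphB. Qed.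
Lemma realCD (x y : R) : (x + y)%:C = x%:C + y%:C :> C. Proof. exact: rmorphD. Qed.
Lemma realCn n : (n%:R : R)%:C = n%:R :> C. Proof. exact: rmorph_nat. Qed.

Lemma conj_form_ge0 (z zc : C) : zc = cj z -> 0 <= zc * z.
Proof. by move=> ->; apply: normJ_ge0. Qed.

Lemma wit_psd (aR bR MR : R) (r w : C) : 0 < aR -> 4%:R * aR * bR = MR ->
  MR = Num.max (nsq r) (nsq w) ->
  psd (Wit aR%:C bR%:C (aR%:C * w * (cj r) / MR%:C) (bR%:C * w * r / MR%:C) r w).
Proof.
move=> a0 hab hM v; rewrite quadform !sum4 !WitE /wf /=.
move: (v (ix i0 i0) 0) (v (ix i0 i1) 0) (v (ix i1 i0) 0) (v (ix i1 i1) 0) => v0 v1 v2 v3.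
have hb : bR = MR / (4%:R * aR) by rewrite -hab; field; lra.
have M0 : 0 <= MR by rewrite hM le_max nsq_ge0.
have aC : aR%:C != 0 by rewrite eq_complex /= negb_and gt_eqF.
have [MZ|Mp] : MR = 0 \/ 0 < MR by rewrite le_eqVlt eq_sym in M0; case/orP: M0 => [/eqP ->|->]; [left|right].
  have [r0 w0] : r = 0 /\ w = 0.
    by move: MZ; rewrite hM => /eqP; rewrite eq_le ge_max => /andP[/andP[h1 h2] _]; split; apply: nsq0; apply/eqP; rewrite eq_le ?h1 ?h2 nsq_ge0.
  rewrite hb MZ r0 w0 ?mul0r ?raddf0 ?mul0r ?mulr0 ?mul0r ?addr0 ?add0r.
  rewrite ?raddf0 ?mulr0 ?mul0r ?addr0 ?add0r.
  have h z : 0 <= (cj z) * aR%:C * z by rewrite mulrAC mulr_ge0 ?normJ_ge0 // ge0C // ltW.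
  by rewrite addr_ge0.
rewrite !conjM !conjV !conjR !conjcK.
case/orP: (le_total (nsq w) (nsq r)) => [hr|hw].
  have eM : MR = nsq r by rewrite hM max_l.
  have r0 : r != 0 by apply/eqP => r0; move: Mp; rewrite eM r0 /nsq /= expr0n /= addr0 ltxx.
  have rc0 : (cj r) != 0 by rewrite conjc_eq0.
  have eb : bR%:C = (r * (cj r)) / (4%:R * aR%:C).
    by rewrite -nsqC -eM hb realCM realCV realCM realCn.
  rewrite eb (_ : MR%:C = r * (cj r)); last by rewrite eM nsqC.
  have := keyid aR%:C r (cj r) w (cj w) v0 v1 v2 v3 (cj v0) (cj v1) (cj v2) (cj v3) aC r0 rc0.
  rewrite /= => ->.
  apply: addr_ge0; apply: mulr_ge0.
  - by rewrite invr_ge0 ge0C // ltW.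
  - apply: conj_form_ge0; rewrite !(conjD, conjM, conjV, conjR, conjcK, conjc_nat).
    by rewrite (mulrC (cj r) r).
  - rewrite -!nsqC; apply: divr_ge0; first by rewrite subr_ge0 lecR.
    by rewrite mulr_ge0 ?ler0n // ge0C // ltW.
  - apply: conj_form_ge0; rewrite !(conjD, conjM, conjV, conjR, conjcK, conjc_nat).
    by rewrite (mulrC (cj r) r).
have eM : MR = nsq w by rewrite hM max_r.
have w0 : w != 0 by apply/eqP => w0; move: Mp; rewrite eM w0 /nsq /= expr0n /= addr0 ltxx.
have wc0 : (cj w) != 0 by rewrite conjc_eq0.
have eb : bR%:C = (w * (cj w)) / (4%:R * aR%:C).
  by rewrite -nsqC -eM hb realCM realCV realCM realCn.
rewrite eb (_ : MR%:C = w * (cj w)); last by rewrite eM nsqC.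
have := keyid2 aR%:C r (cj r) w (cj w) v0 v1 v2 v3 (cj v0) (cj v1) (cj v2) (cj v3) aC w0 wc0.
rewrite /= => ->.
apply: addr_ge0; apply: mulr_ge0.
- by rewrite invr_ge0 ge0C // ltW.
- apply: conj_form_ge0; rewrite !(conjD, conjM, conjV, conjR, conjcK, conjc_nat).
  by rewrite (mulrC (cj w) w).
- rewrite -!nsqC; apply: divr_ge0; first by rewrite subr_ge0 lecR.
  by rewrite mulr_ge0 ?ler0n // ge0C // ltW.
- apply: conj_form_ge0; rewrite !(conjD, conjM, conjV, conjR, conjcK, conjc_nat).
  by rewrite (mulrC (cj w) w).
Qed.
End SW.
Arguments wit_psd {R}. Arguments realCM {R}. Arguments realCV {R}. Arguments realCD {R}. Arguments realCB {R}. Arguments realCn {R}. Arguments conjM {R}. Arguments conjD {R}. Arguments conjV {R}.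

Section SF.
Variable R : realType.
Local Notation C := (R[i]).
Local Notation cj := (@conjc R).


Lemma ReD (x y : C) : complex.Re (x + y) = complex.Re x + complex.Re y.
Proof. by case: x => ? ?; case: y => ? ?. Qed.

Lemma ReR (x : R) : complex.Re (x%:C) = x. Proof. by []. Qed.

Lemma Re4 (z : C) : complex.Re (4%:R * z) = 4%:R * complex.Re z.
Proof. case: z => x y; rewrite -(realCn 4) /=; simpc. by rewrite /=. Qed.

Lemma half2 (z : C) : z / 2%:R + z / 2%:R = z.
Proof. by field. Qed.

Lemma state_facts (rho : 'M[C]_2) : density rho -> \tr (rho *m sigz R) = 0 ->
  [/\ rho i0 i0 = (2^-1)%:C, rho i1 i1 = (2^-1)%:C, rho i1 i0 = cj (rho i0 i1)
    & 4%:R * nsq (rho i0 i1) <= 1].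
Proof.
move=> [H tr1] trz.
move: tr1 trz; rewrite /mxtrace !sum2 !mxE !sum2 !sigzE /= => tr1 trz.
have e11 : rho i0 i0 - rho i1 i1 = 0 by rewrite -trz; ring.
have e0 : rho i0 i0 = 2^-1.
  have -> : rho i0 i0 = ((rho i0 i0 + rho i1 i1) + (rho i0 i0 - rho i1 i1)) / 2%:R by field.
  by rewrite tr1 e11 addr0 mul1r.
have e1 : rho i1 i1 = 2^-1.
  have -> : rho i1 i1 = ((rho i0 i0 + rho i1 i1) - (rho i0 i0 - rho i1 i1)) / 2%:R by field.
  by rewrite tr1 e11 subr0 mul1r.
have e2 : (2^-1 : R)%:C = 2^-1 by rewrite realCV realCn.
split; [by rewrite e2 | by rewrite e2 | exact: herm | ].
have := minor i0 i1 isT H; rewrite e0 e1 -e2 /=.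
lra.
Qed.

Definition g (M : R) : R := 2%:R - Num.sqrt (4%:R - 16%:R * M).

Lemma witness (rho omega : 'M[C]_2) : density rho -> density omega ->
  \tr (rho *m sigz R) = 0 -> \tr (omega *m sigz R) = 0 ->
  exists P, coupling rho omega P /\
    complex.Re (\tr (P *m Cz2 R)) = g (Num.max (nsq (rho i0 i1)) (nsq (omega i0 i1))).
Proof.
move=> dr dw tr tw.
have [r0 r1 rh rb] := state_facts rho dr tr; have [w0 w1 wh wb] := state_facts omega dw tw.
set r := rho i0 i1 in rh rb *; set w := omega i0 i1 in wh wb *.
set M := Num.max (nsq r) (nsq w).
have M0 : 0 <= 4%:R - 16%:R * M.
  have : M <= 4^-1 by rewrite /M ge_max; apply/andP; split; lra.
  lra.
set S := Num.sqrt (4%:R - 16%:R * M).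
have S0 : 0 <= S by apply: sqrtr_ge0.
have S2 : S ^+ 2 = 4%:R - 16%:R * M by rewrite sqr_sqrtr.
set aR := (2%:R + S) / 8%:R; set bR := (2%:R - S) / 8%:R.
have a0 : 0 < aR by rewrite /aR; lra.
have hab : 4%:R * aR * bR = M by rewrite /aR /bR; nra.
have hsum : aR + bR = 2^-1 by rewrite /aR /bR; lra.
exists (Wit aR%:C bR%:C (aR%:C * w * (cj r) / M%:C) (bR%:C * w * r / M%:C) r w).
split; last first.
  rewrite trCz !WitE /wf /= /g -/S /bR; lra.
split; [split; [exact: wit_psd | ] | split].
- rewrite /mxtrace sum4 !WitE /wf /= -!realCD -[1]/(1%:C); congr (_%:C); lra.
- apply/matrixP => i k; rewrite !mxE sum2.
  case: (ord2P i) => ->; case: (ord2P k) => ->; rewrite ?WitE /wf /=.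
  + by rewrite w0 -hsum realCD.
  + by rewrite half2.
  + by rewrite half2 wh.
  + by rewrite w1 -hsum realCD addrC.
- apply/matrixP => i k; rewrite !mxE sum2.
  case: (ord2P i) => ->; case: (ord2P k) => ->; rewrite ?WitE /wf /=.
  + by rewrite r0 -hsum realCD.
  + by rewrite half2 rh.
  + by rewrite half2.
  + by rewrite r1 -hsum realCD addrC.
Qed.

Lemma gle (M c : R) : (2%:R - c) ^+ 2 <= 4%:R - 16%:R * M -> g M <= c.
Proof.
move=> h; rewrite /g.
have : 2%:R - c <= Num.sqrt (4%:R - 16%:R * M).
  apply: (le_trans (ler_norm _)); rewrite -sqrtr_sqr; exact: ler_wsqrtr.
lra.
Qed.

Lemma lower (rho omega : 'M[C]_2) P : density rho -> density omega ->
  \tr (rho *m sigz R) = 0 -> \tr (omega *m sigz R) = 0 -> coupling rho omega P ->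
  g (Num.max (nsq (rho i0 i1)) (nsq (omega i0 i1))) <= complex.Re (\tr (P *m Cz2 R)).
Proof.
move=> dr dw tr tw [[HP _] [H2 H1]].
have [r0 r1 rh rb] := state_facts rho dr tr; have [w0 w1 wh wb] := state_facts omega dw tw.
have e00 : ptr2 P i0 i0 = omega i0 i0 by rewrite H2.
have e11 : ptr2 P i1 i1 = omega i1 i1 by rewrite H2.
have e01 : ptr2 P i0 i1 = omega i0 i1 by rewrite H2.
have f00 : ptr1 P i0 i0 = rho^T i0 i0 by rewrite H1.
have f11 : ptr1 P i1 i1 = rho^T i1 i1 by rewrite H1.
have f01 : ptr1 P i0 i1 = rho^T i0 i1 by rewrite H1.
move: e00 e11 e01 f00 f11 f01; rewrite /= !mxE !sum2 r0 r1 w0 w1 rh.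
move=> /(congr1 (@complex.Re R)); rewrite ReD ReR => e00.
move=> /(congr1 (@complex.Re R)); rewrite ReD ReR => e11.
move=> e01.
move=> /(congr1 (@complex.Re R)); rewrite ReD ReR => f00.
move=> /(congr1 (@complex.Re R)); rewrite ReD ReR => f11.
move=> f01.
have nw : nsq (omega i0 i1) <= 2%:R * (nsq (P (ix i0 i0) (ix i1 i0)) + nsq (P (ix i0 i1) (ix i1 i1))).
  by rewrite -e01; apply: nsqD.
have nr : nsq (rho i0 i1) <= 2%:R * (nsq (P (ix i0 i0) (ix i0 i1)) + nsq (P (ix i1 i0) (ix i1 i1))).
  by rewrite -nsqJ -f01; apply: nsqD.
have m1 := minor (ix i0 i0) (ix i1 i0) isT HP.
have m2 := minor (ix i0 i1) (ix i1 i1) isT HP.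
have m3 := minor (ix i0 i0) (ix i0 i1) isT HP.
have m4 := minor (ix i1 i0) (ix i1 i1) isT HP.
rewrite trCz Re4 ReD.
move: e00 e11 f00 f11 nw nr m1 m2 m3 m4.
rewrite -/(ix i0 i0) -/(ix i0 i1) -/(ix i1 i0) -/(ix i1 i1).
set p00 := complex.Re (P (ix i0 i0) (ix i0 i0)).
set p01 := complex.Re (P (ix i0 i1) (ix i0 i1)).
set p10 := complex.Re (P (ix i1 i0) (ix i1 i0)).
set p11 := complex.Re (P (ix i1 i1) (ix i1 i1)).
set n1 := nsq (P (ix i0 i0) (ix i1 i0)); set n2 := nsq (P (ix i0 i1) (ix i1 i1)).
set n3 := nsq (P (ix i0 i0) (ix i0 i1)); set n4 := nsq (P (ix i1 i0) (ix i1 i1)).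
move=> e00 e11 f00 f11 nw nr m1 m2 m3 m4.
have q10 : p10 = p01 by lra.
have q11 : p11 = p00 by lra.
rewrite q10 q11 in m1 m2 m3 m4 *.
have hM : Num.max (nsq (rho i0 i1)) (nsq (omega i0 i1)) <= 4%:R * (p00 * p01).
  rewrite ge_max; apply/andP; split; lra.
apply: gle.
have q00 : p00 = 2^-1 - p01 by lra.
rewrite q00 in hM.
nra.
Qed.

Lemma D2_eq (rho omega : 'M[C]_2) : density rho -> density omega ->
  \tr (rho *m sigz R) = 0 -> \tr (omega *m sigz R) = 0 ->
  D2 rho omega = g (Num.max (nsq (rho i0 i1)) (nsq (omega i0 i1))).
Proof.
move=> dr dw tr tw.
have [P [cP eP]] := witness rho omega dr dw tr tw.
rewrite /D2.
match goal with |- inf ?X = _ => set E := X end.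
set M := Num.max _ _ in eP *.
have lb : lbound E (g M) by move=> x [Q [cQ ->]]; exact: lower.
apply/eqP; rewrite eq_le; apply/andP; split.
- have := @ge_inf R E (ex_intro _ (g M) lb); apply; exists P; split => //.
- by apply: lb_le_inf => //; exists (g M); exists P; split.
Qed.

Lemma gmono (M M' : R) : M <= M' -> g M <= g M'.
Proof.
move=> h; rewrite /g.
have : Num.sqrt (4%:R - 16%:R * M') <= Num.sqrt (4%:R - 16%:R * M) by apply: ler_wsqrtr; lra.
lra.
Qed.
End SF.
Arguments g {R}.

Local Close Scope complex_scope.

Theorem proposition3p8 (R : realType) (rho sigma omega : 'M[R[i]]_2) :
  density rho -> density sigma -> density omega ->
  \tr (rho *m sigz R) = 0 -> \tr (sigma *m sigz R) = 0 -> \tr (omega *m sigz R) = 0 ->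
  d2 rho omega <= d2 rho sigma + d2 sigma omega.
Proof.
move=> dr ds dw tr ts tw.
rewrite /d2 !D2_eq // !maxxx.
set a := nsq (rho i0 i1); set b := nsq (sigma i0 i1); set c := nsq (omega i0 i1).
case/orP: (le_total c a) => h.
- rewrite (max_l h).
  have h1 : g a <= g (Num.max a b) by apply: gmono; rewrite le_max lexx.
  have h2 : g b <= g (Num.max b c) by apply: gmono; rewrite le_max lexx.
  lra.
- rewrite (max_r h).
  have h1 : g c <= g (Num.max b c) by apply: gmono; rewrite le_max lexx orbT.
  have h2 : g b <= g (Num.max a b) by apply: gmono; rewrite le_max lexx orbT.
  lra.
Qed.
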